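(* Let $\mathcal{A}$ be a CA of radius $r$ over alphabet $Q$. If $w$ is the foot of a wall of $\mathcal{A}$ having some brick of length at least $r$, then for every word $u\in Q^*$ there exists a wall of $\mathcal{A}$ whose foot is $wuw$ and which has bricks of length at least $|u|$.
   Context: A one-dimensional cellular automaton (CA) $\mathcal{A}$ is given by a finite alphabet $Q$, a radius $r\ge 0$ and a local rule $\delta:Q^{2r+1}\to Q$; it acts on configurations $c\in Q^{\mathbb{Z}}$ by $\mathcal{A}(c)_i=\delta(c_{i-r},\dots,c_{i+r})$. For $u\in Q^*$, $i\in\mathbb{Z}$, $[u]_i=\{c\in Q^{\mathbb{Z}}: c_i\cdots c_{i+|u|-1}=u\}$. Walls: for $u\in Q^*$ let $\langle u\rangle=[u]_{-|u|/2}$ if $|u|$ is even and $\langle u\rangle=[u]_{-(|u|+1)/2}$ if $|u|$ is odd. A wall for $\mathcal{A}$ is a sequence $(w_n)_{n\ge0}$ of nonempty words over $Q$ such that (1) for every $c\in\langle w_0\rangle$ and every $n\ge1$, $\mathcal{A}^n(c)\in\langle w_n\rangle$, and (2) the sequence $(|w_n|)_{n\ge0}$ is non-increasing. The word $w_0$ is the foot of the wall. A word $w$ is a brick of the wall $(w_n)$ if there are integers $p\ge1$, $n_0\ge0$ with $w_{pn+n_0}=w$ for all $n\ge0$. *)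

(* Defs.v *)
From mathcomp Require Import all_boot all_order all_algebra.
Set Implicit Arguments. Unset Strict Implicit. Unset Printing Implicit Defensive.
Import GRing.Theory Num.Theory.
Local Open Scope ring_scope.

Definition config (Q : finType) := int -> Q.

Definition ca_global (Q : finType) (r : nat)
  (delta : (2 * r + 1).-tuple Q -> Q) (c : config Q) : config Q :=
  fun i => delta [tuple c (i - r%:Z + k%:Z) | k < 2 * r + 1].

Definition cylinder (Q : finType) (u : seq Q) (i : int) : config Q -> Prop :=
  fun c => forall k : nat, (k < size u)%N -> c (i + k%:Z) = nth (c i) u k.

Definition wall_offset (Q : finType) (u : seq Q) : int :=
  if odd (size u) then - ((size u).+1./2)%:Z else - ((size u)./2)%:Z.

Definition centered (Q : finType) (u : seq Q) : config Q -> Prop :=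
  cylinder u (wall_offset u).

Definition is_wall (Q : finType) (r : nat) (delta : (2 * r + 1).-tuple Q -> Q)
  (w : nat -> seq Q) : Prop :=
  (forall n, w n <> [::]) /\
  (forall c : config Q, centered (w 0%N) c ->
     forall n : nat, (1 <= n)%N -> centered (w n) (iter n (ca_global delta) c)) /\
  (forall n : nat, (size (w n.+1) <= size (w n))%N).

Definition is_brick (Q : finType) (w : nat -> seq Q) (b : seq Q) : Prop :=
  exists p n0 : nat, (1 <= p)%N /\ forall n : nat, w (p * n + n0)%N = b.

(* Main.v *)
Require Import Defs.
From mathcomp Require Import all_boot all_order all_algebra.
From mathcomp Require Import zify.
Set Implicit Arguments. Unset Strict Implicit. Unset Printing Implicit Defensive.
Import GRing.Theory Num.Theory.

Section Helpers.
Local Open Scope ring_scope.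
Variables (Q : finType) (r : nat) (delta : (2 * r + 1)%N.-tuple Q -> Q).
Local Notation A := (ca_global delta).

Lemma off_eq (v : seq Q) : wall_offset v = - (uphalf (size v))%:Z.
Proof.
rewrite /wall_offset; case: ifP => ho; first by rewrite uphalfE.
by rewrite uphalf_half ho.
Qed.

Lemma ca_congr (c c' : config Q) : c =1 c' -> A c =1 A c'.
Proof. move=> h i; rewrite /ca_global; congr delta; apply: eq_mktuple => k; exact: h. Qed.

Lemma iter_congr n (c c' : config Q) : c =1 c' -> iter n A c =1 iter n A c'.
Proof. elim: n => [|n IH] h //= i; apply: ca_congr; exact: IH. Qed.

Lemma ca_shift (c : config Q) (s : int) :
  A (fun i => c (i + s)) =1 fun i => A c (i + s).
Proof. move=> i; rewrite /ca_global; congr delta; apply: eq_mktuple => k /=; congr c; lia. Qed.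

Lemma iter_shift n (c : config Q) (s : int) :
  iter n A (fun i => c (i + s)) =1 fun i => iter n A c (i + s).
Proof.
elim: n => [|n IH] //= i.
rewrite (ca_congr IH); exact: ca_shift.
Qed.

Lemma ca_local (c c' : config Q) (i : int) :
  (forall t : int, i - r%:Z <= t -> t <= i + r%:Z -> c t = c' t) -> A c i = A c' i.
Proof.
move=> h; rewrite /ca_global; congr delta; apply: eq_mktuple => k /=.
have hk := ltn_ord k.
apply: h; lia.
Qed.
Lemma wall_size_mono (W : nat -> seq Q) : is_wall delta W ->
  forall n m, (n <= m)%N -> (size (W m) <= size (W n))%N.
Proof.
move=> [_ [_ hs]] n m /subnK <-; elim: (m - n)%N => [|d IH] //.
rewrite addSn; exact: leq_trans (hs _) IH.
Qed.

Lemma wall_shift (W : nat -> seq Q) (c : config Q) (s : int) n j : is_wall delta W ->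
  centered (W 0%N) (fun i => c (i + s)) -> (1 <= n)%N -> (j < size (W n))%N ->
  iter n A c (wall_offset (W n) + j%:Z + s) = nth (c 0) (W n) j.
Proof.
move=> [_ [hw _]] hc hn hj.
have := hw _ hc n hn j hj; rewrite (iter_shift n c s) => ->.
exact: set_nth_default.
Qed.

Lemma uh_h l : (uphalf l + l./2)%N = l.
Proof. lia. Qed.

Lemma per_A (c : config Q) (z : int) : (forall i, c (i + z) = c i) ->
  forall i, A c (i + z) = A c i.
Proof. move=> h i; rewrite -ca_shift; exact: ca_congr. Qed.

Lemma per_iter n (c : config Q) (z : int) : (forall i, c (i + z) = c i) ->
  forall i, iter n A c (i + z) = iter n A c i.
Proof. elim: n => [|n IH] h //= i; apply: per_A; exact: IH. Qed.

Lemma per_nat (c : config Q) (P : int) : (forall i, c (i + P) = c i) ->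
  forall (n : nat) i, c (i + n%:Z * P) = c i.
Proof.
move=> h; elim => [|n IH] i; first by rewrite mul0r addr0.
have -> : i + n.+1%:Z * P = (i + n%:Z * P) + P by nia.
by rewrite h IH.
Qed.

Lemma per_int (c : config Q) (P : int) : (forall i, c (i + P) = c i) ->
  forall (q : int) i, c (i + q * P) = c i.
Proof.
move=> h q i; case: q => n; first exact: per_nat.
transitivity (c (i + Negz n * P + n.+1%:Z * P)); first by rewrite per_nat.
congr c; rewrite NegzE; nia.
Qed.

Section Det.
Variables (W : nat -> seq Q) (u : seq Q).
Hypothesis hW : is_wall delta W.
Hypothesis hr : forall n, (r <= size (W n))%N.
Local Notation w := (W 0%N).
Local Notation m := (size (W 0%N)).
Local Notation k := (size u).
Local Notation o := (wall_offset (W 0%N ++ u ++ W 0%N)).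
Local Notation sL := (o + (uphalf m)%:Z).
Local Notation sR := (o + (uphalf m)%:Z + (m + k)%:Z).

Lemma centL (c : config Q) : centered (w ++ u ++ w) c -> centered w (fun i => c (i + sL)).
Proof.
move=> hc j hj /=.
have -> : wall_offset w + j%:Z + sL = o + j%:Z by rewrite off_eq; lia.
rewrite hc; last by rewrite !size_cat; lia.
rewrite nth_cat hj; exact: set_nth_default.
Qed.

Lemma centR (c : config Q) : centered (w ++ u ++ w) c -> centered w (fun i => c (i + sR)).
Proof.
move=> hc j hj /=.
have -> : wall_offset w + j%:Z + sR = o + (m + (k + j))%:Z by rewrite off_eq; lia.
rewrite hc; last by rewrite !size_cat; lia.
rewrite nth_cat ltnNge leq_addr /= addKn nth_cat ltnNge leq_addr /= addKn.
exact: set_nth_default.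
Qed.

Lemma det (c c' : config Q) : centered (w ++ u ++ w) c -> centered (w ++ u ++ w) c' ->
  forall n (i : int), sL + wall_offset (W n) <= i ->
  i < sR + wall_offset (W n) + (size (W n))%:Z ->
  iter n A c i = iter n A c' i.
Proof.
move=> hc hc'; elim => [|n IH] i hi1 hi2.
  move: hi1 hi2; rewrite (off_eq w) => hi1 hi2.
  have [j hij] : exists j : nat, i = o + j%:Z by exists (absz (i - o)); lia.
  subst i.
  unfold centered, cylinder in hc, hc'. simpl.
  have hj : (j < size (w ++ u ++ w))%N by rewrite !size_cat; lia.
  rewrite hc // hc' //; exact: set_nth_default.
have hmono := wall_size_mono hW (leqnSn n).
have hrn := hr n.+1.
move: hi1 hi2 IH; rewrite (off_eq (W n)) (off_eq (W n.+1)) => hi1 hi2 IH.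
have e1 := uh_h (size (W n)); have e2 := uh_h (size (W n.+1)).
have m1 := uphalf_leq hmono; have m2 := half_leq hmono.
case: (boolP (i < sL - (uphalf (size (W n.+1)))%:Z + (size (W n.+1))%:Z)) => hL.
  have [j [hij hj]] : exists j : nat, (i = wall_offset (W n.+1) + j%:Z + sL)%R /\ (j < size (W n.+1))%N.
    exists (absz (i - sL - wall_offset (W n.+1))%R); rewrite (off_eq (W n.+1)); lia.
  rewrite hij (wall_shift hW (centL hc)) // (wall_shift hW (centL hc')) //.
  exact: set_nth_default.
case: (boolP (sR - (uphalf (size (W n.+1)))%:Z <= i)) => hR.
  have [j [hij hj]] : exists j : nat, (i = wall_offset (W n.+1) + j%:Z + sR)%R /\ (j < size (W n.+1))%N.
    exists (absz (i - sR - wall_offset (W n.+1))%R); rewrite (off_eq (W n.+1)); lia.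
  rewrite hij (wall_shift hW (centR hc)) // (wall_shift hW (centR hc')) //.
  exact: set_nth_default.
rewrite /=; apply: ca_local => t ht1 ht2; apply: IH; lia.
Qed.
End Det.

End Helpers.

Theorem mainTheorem3 (Q : finType) (r : nat) (delta : (2 * r + 1).-tuple Q -> Q)
  (w : seq Q) :
  (exists W : nat -> seq Q, is_wall delta W /\ W 0%N = w /\
     exists b : seq Q, is_brick W b /\ (r <= size b)%N) ->
  forall u : seq Q,
    exists W' : nat -> seq Q, is_wall delta W' /\ W' 0%N = w ++ u ++ w /\
      exists b : seq Q, is_brick W' b /\ (size u <= size b)%N.
Proof.
move=> [W [hW [hw0 [b [[p [n0 [hp hb]]] hrb]]]]] u.
subst w.
have hmono := wall_size_mono hW.
have hr : forall n, (r <= size (W n))%N.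
  by move=> n; apply: leq_trans hrb _; rewrite -(hb n); apply: hmono; nia.
have hne : forall n, (0 < size (W n))%N.
  by case: hW => hne _ n; move: (hne n); case: (W n).
have [x0 _] : exists x : Q, True.
  by move: (hne 0%N); case: (W 0%N) => [|x s] //; exists x.
pose m := size (W 0%N). pose k := size u.
have hm : (0 < m)%N by exact: hne.
pose P := (m + k)%N.
pose o := wall_offset (W 0%N ++ u ++ W 0%N).
pose c0 : config Q := fun i => nth x0 (W 0%N ++ u) (absz ((i - o) %% P%:Z)%Z).
have hc0 : centered (W 0%N ++ u ++ W 0%N) c0.
  move=> j hj; rewrite /c0 -/o.
  have -> : (o + j%:Z - o = j%:Z)%R by lia.
  rewrite modz_nat absz_nat.
  move: hj; rewrite !size_cat -/m -/k => hj.
  rewrite catA [RHS]nth_cat size_cat -/m -/k -/P.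
  case: (ltnP j P) => hjP.
    by rewrite modn_small //; apply: set_nth_default; rewrite size_cat.
  have -> : (j %% P = j - P)%N.
    by rewrite -{1}(subnK hjP) modnDr modn_small //; rewrite /P; lia.
  have hjm : (j - P < m)%N by rewrite /P; lia.
  rewrite nth_cat -/m hjm; exact: set_nth_default.
have hc0per : forall i, c0 (i + P%:Z)%R = c0 i.
  by move=> i; rewrite /c0 addrAC modzDr.
pose g n := iter n (ca_global delta) c0.
have hper : forall n i, g n (i + P%:Z)%R = g n i.
  by move=> n; apply: per_iter.
have hP0 : (0 < P)%N by rewrite /P; lia.
pose T := {ffun 'I_P -> Q}.
pose f : 'I_(#|T|.+1) -> T := fun x => [ffun y : 'I_P => g x (Posz y)].
have : ~~ injectiveb f.
  apply/negP => /injectiveP/leq_card; by rewrite card_ord ltnn.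
move=> /injectivePn [x [y hxy hf]].
have [a [b' [hab hfab]]] : exists a b' : nat, (a < b')%N /\ (forall i : 'I_P, g a i = g b' i).
  have hfi : forall i : 'I_P, g x i = g y i.
    by move=> i; have := congr1 (fun F : T => F i) hf; rewrite !ffunE.
  case: (ltngtP x y) => h.
  - by exists x, y; split.
  - by exists y, x; split => // i; rewrite hfi.
  - by case/eqP: hxy; apply: val_inj.
have hgab : forall i, g a i = g b' i.
  move=> i.
  have hPz : (P%:Z != 0)%R by lia.
  have h1 := modz_ge0 i hPz.
  have h2 : ((i %% P%:Z)%Z < P%:Z)%R by apply: ltz_pmod; lia.
  have hy : (absz (i %% P%:Z)%Z < P)%N by lia.
  have -> : i = (Posz (Ordinal hy) + (i %/ P%:Z)%Z * P%:Z)%R.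
    by rewrite /= gez0_abs // addrC -divz_eq.
  rewrite (per_int (hper a)) (per_int (hper b')); exact: hfab.
pose p' := (b' - a)%N.
have hstep : forall N, (a <= N)%N -> forall i, g (N + p')%N i = g N i.
  move=> N hN i.
  have e1 : (N + p' = (N - a) + b')%N by rewrite /p'; lia.
  have e2 : (N = (N - a) + a)%N by lia.
  rewrite /g e1 iterD [in RHS]e2 iterD.
  apply: iter_congr => z; exact: esym (hgab z).
have hperiod : forall t N, (a <= N)%N -> forall i, g (p' * t + N)%N i = g N i.
  elim => [|t IH] N hN i; first by rewrite muln0.
  have -> : (p' * t.+1 + N = (p' * t + N) + p')%N by lia.
  rewrite hstep; first exact: IH.
  lia.
pose K := (k + 2)%N.
pose W' := fun n => if n is 0 then W 0%N ++ u ++ W 0%N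
  else mkseq (fun j => g n (- (uphalf K)%:Z + j%:Z)%R) K.
exists W'; split; [|split; [by [] |]].
  split; [|split].
  - case=> [|n] /=.
      by move: (hne 0%N); case: (W 0%N).
    by rewrite /mkseq /K addn2.
  - move=> c hc [|n] // _ j.
    rewrite /= size_mkseq => hj.
    rewrite (off_eq (mkseq _ K)) size_mkseq nth_mkseq //.
    have hl1 := hne n.+1.
    have hlm : (size (W n.+1) <= m)%N by exact: hmono.
    change (iter n.+1 (ca_global delta) c (- (uphalf K)%:Z + j%:Z)%R = iter n.+1 (ca_global delta) c0 (- (uphalf K)%:Z + j%:Z)%R).
    rewrite (det hW hr hc hc0) //.
      rewrite (off_eq (W n.+1)) (off_eq (W 0%N ++ u ++ W 0%N)) ?size_cat -/m -/k; lia.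
    rewrite (off_eq (W n.+1)) (off_eq (W 0%N ++ u ++ W 0%N)) ?size_cat -/m -/k; lia.
  - case=> [|n] /=; rewrite !size_mkseq ?size_cat -/m -/k /K; lia.
exists (W' a.+1); split; last by rewrite /W' size_mkseq /K; lia.
exists p', a.+1; split; first by rewrite /p'; lia.
move=> t; rewrite /W' addnS -addnS.
apply: eq_mkseq => j; exact: hperiod.
Qed.
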